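(* Let $(X,Y)$ be a pair of racks which is productive and synchronized. Then the natural group homomorphism $\Gamma_{X\times Y}\to\Gamma_X\times\Gamma_Y\times\Gamma_{X_{\mathrm{triv}}\times Y_{\mathrm{triv}}}$ is injective.
   Context: A rack is a set $X$ with an operation $x^y$ such that $x\mapsto x^y$ is bijective for each $y$ and $(z^x)^y=(z^y)^{x^y}$. The product rack has $(x,a)^{(y,b)}=(x^y,a^b)$. The structure group is $\Gamma_X=\langle X\mid y^{-1}xy=x^y\rangle$, functorial; $\Gamma'$ denotes commutator subgroup. $X_{\mathrm{triv}}$ is the set of connected components of $X$ (classes of the smallest equivalence relation with $x\sim x^y$), regarded as a trivial rack ($a^b=a$), with the quotient map $X\to X_{\mathrm{triv}}$ a rack morphism; $\Gamma$ of a trivial rack is the free abelian group on it. The pair $(X,Y)$ is productive if the homomorphism $\Gamma'_{X\times Y}\to\Gamma'_X\times\Gamma'_Y$ induced by $\Gamma_{X\times Y}\to\Gamma_X\times\Gamma_Y$ is injective, and synchronized if the natural surjection $(X\times Y)_{\mathrm{triv}}\to X_{\mathrm{triv}}\times Y_{\mathrm{triv}}$ is a bijection. The map to $\Gamma_{X_{\mathrm{triv}}\times Y_{\mathrm{triv}}}$ is induced by $(x,y)\mapsto$(component of $x$, component of $y$). *)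

(* Defs.v *)
From mathcomp Require Import all_boot.
From Stdlib Require Import IndefiniteDescription.
Set Implicit Arguments. Unset Strict Implicit. Unset Printing Implicit Defensive.

Record rack := Rack {
  carrier :> Type;
  rop : carrier -> carrier -> carrier;          (* rop x y = x^y *)
  rop_bij : forall y, bijective (fun x => rop x y);
  rop_dist : forall x y z, rop (rop z x) y = rop (rop z y) (rop x y)
}.

Definition prod_op (X Y : rack) (p q : X * Y) : X * Y :=
  (rop p.1 q.1, rop p.2 q.2).

Lemma prod_op_bij (X Y : rack) (q : X * Y) : bijective (fun p => prod_op p q).
Proof.
case: (rop_bij q.1) => g1 h1 k1; case: (rop_bij q.2) => g2 h2 k2.
apply: (@Bijective _ _ _ (fun p : X * Y => (g1 p.1, g2 p.2))).
- by case=> a b; rewrite /prod_op /= (h1 a) (h2 b).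
- by case=> a b; rewrite /prod_op /= (k1 a) (k2 b).
Qed.

Lemma prod_op_dist (X Y : rack) (x y z : X * Y) :
  prod_op (prod_op z x) y = prod_op (prod_op z y) (prod_op x y).
Proof. by rewrite /prod_op /= (rop_dist x.1 y.1 z.1) (rop_dist x.2 y.2 z.2). Qed.

Definition prod_rack (X Y : rack) : rack :=
  @Rack (X * Y) (@prod_op X Y) (@prod_op_bij X Y) (@prod_op_dist X Y).

Lemma triv_bij (T : Type) (y : T) : bijective (fun x : T => (fun a _ => a) x y).
Proof. exact: (@Bijective _ _ _ id). Qed.
Lemma triv_dist (T : Type) (x y z : T) :
  (fun a (_ : T) => a) ((fun a (_ : T) => a) z x) y
  = (fun a (_ : T) => a) ((fun a (_ : T) => a) z y) ((fun a (_ : T) => a) x y).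
Proof. by []. Qed.
Definition triv_rack (T : Type) : rack := @Rack T (fun a _ => a) (@triv_bij T) (@triv_dist T).

Inductive connected (X : rack) : X -> X -> Prop :=
| conn_refl x : connected x x
| conn_sym x y : connected x y -> connected y x
| conn_trans x y z : connected x y -> connected y z -> connected x z
| conn_step x y : connected x (rop x y).

(* X_triv as a type: the set of connected components (equivalence classes). *)
Definition comps (X : rack) : Type :=
  {P : X -> Prop | exists x, P = connected x}.
Definition comp_of (X : rack) (x : X) : comps X :=
  exist _ (connected x) (ex_intro _ x erefl).
Definition Xtriv (X : rack) : rack := triv_rack (comps X).

Definition comp_rep (X : rack) (P : comps X) : X :=
  proj1_sig (constructive_indefinite_description _ (proj2_sig P)).

(* The natural map (X x Y)_triv -> X_triv x Y_triv (well defined, independent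
   of the representative). *)
Definition sync_map (X Y : rack) (P : comps (prod_rack X Y)) : comps X * comps Y :=
  (comp_of (comp_rep P).1, comp_of (comp_rep P).2).

Definition synchronized (X Y : rack) : Prop := bijective (@sync_map X Y).

(* Structure group Gamma_X = < X | y^-1 x y = x^y >, presented by words in
   letters (x, b) where b = false means x and b = true means x^-1. *)
Definition word (X : rack) := seq (X * bool).

Inductive sg_eq (X : rack) : word X -> word X -> Prop :=
| sg_refl w : sg_eq w w
| sg_sym u v : sg_eq u v -> sg_eq v u
| sg_trans u v w : sg_eq u v -> sg_eq v w -> sg_eq u w
| sg_ctx l r a b : sg_eq a b -> sg_eq (l ++ a ++ r) (l ++ b ++ r)
| sg_cancel x b : sg_eq [:: (x, b); (x, ~~ b)] [::]
| sg_conj x y : sg_eq [:: (y, true); (x, false); (y, false)] [:: (rop x y, false)].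

Definition winv (X : rack) (w : word X) : word X :=
  rev (map (fun p => (p.1, ~~ p.2)) w).

Definition wmap (X Y : rack) (f : X -> Y) (w : word X) : word Y :=
  map (fun p => (f p.1, p.2)) w.

(* Commutator subgroup Gamma'_X: subgroup generated by commutators
   [a,b] = a^-1 b^-1 a b (as a set of words, closed under sg_eq). *)
Inductive in_comm (X : rack) : word X -> Prop :=
| comm_gen a b : in_comm (winv a ++ winv b ++ a ++ b)
| comm_one : in_comm [::]
| comm_mul u v : in_comm u -> in_comm v -> in_comm (u ++ v)
| comm_inv u : in_comm u -> in_comm (winv u)
| comm_eq u v : sg_eq u v -> in_comm u -> in_comm v.

(* (X,Y) productive: Gamma'_{XxY} -> Gamma'_X x Gamma'_Y is injective. *)
Definition productive (X Y : rack) : Prop :=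
  forall w1 w2 : word (prod_rack X Y),
    in_comm w1 -> in_comm w2 ->
    sg_eq (wmap (fun p : prod_rack X Y => p.1) w1)
          (wmap (fun p : prod_rack X Y => p.1) w2) ->
    sg_eq (wmap (fun p : prod_rack X Y => p.2) w1)
          (wmap (fun p : prod_rack X Y => p.2) w2) ->
    sg_eq w1 w2.

Definition to_triv (X Y : rack) (p : prod_rack X Y) :
  prod_rack (Xtriv X) (Xtriv Y) := (comp_of p.1, comp_of p.2).

(* Main.v *)
Require Import Defs.
From mathcomp Require Import all_boot zify.
From Stdlib Require Import ClassicalEpsilon ProofIrrelevance FunctionalExtensionality PropExtensionality.
Set Implicit Arguments. Unset Strict Implicit. Unset Printing Implicit Defensive.

Section Words.
Variable X : rack.
Implicit Types u v w a b l r : word X.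

Lemma sg_catl l a b : sg_eq a b -> sg_eq (l ++ a) (l ++ b).
Proof. by move=> H; have := sg_ctx l [::] H; rewrite !cats0. Qed.
Lemma sg_catr r a b : sg_eq a b -> sg_eq (a ++ r) (b ++ r).
Proof. exact: (sg_ctx [::] r). Qed.
Lemma sg_cat a a' b b' : sg_eq a a' -> sg_eq b b' -> sg_eq (a ++ b) (a' ++ b').
Proof. move=> H1 H2; apply: sg_trans (sg_catr _ H1) (sg_catl _ H2). Qed.

Lemma winv_cat a b : winv (a ++ b) = winv b ++ winv a.
Proof. by rewrite /winv map_cat rev_cat. Qed.
Lemma winv_cons x w : winv (x :: w) = winv w ++ [:: (x.1, ~~ x.2)].
Proof. by rewrite /winv /= rev_cons cats1. Qed.
Lemma winvK w : winv (winv w) = w.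
Proof.
rewrite /winv map_rev revK -map_comp -[RHS]map_id; apply: eq_map => -[x b] /=.
by rewrite negbK.
Qed.

Lemma sg_mulV w : sg_eq (w ++ winv w) [::].
Proof.
elim: w => [|[x b] w IH] /=; first exact: sg_refl.
rewrite winv_cons catA -cat_cons.
apply: sg_trans (sg_catl [:: (x, b)] (sg_catr [:: (x, ~~ b)] IH)) _.
exact: sg_cancel.
Qed.
Lemma sg_Vmul w : sg_eq (winv w ++ w) [::].
Proof. by have := sg_mulV (winv w); rewrite winvK. Qed.

Lemma sg_dropl w a : sg_eq (w ++ winv w ++ a) a.
Proof. by rewrite catA; have := sg_catr a (sg_mulV w). Qed.
Lemma sg_dropVl w a : sg_eq (winv w ++ w ++ a) a.
Proof. by rewrite catA; have := sg_catr a (sg_Vmul w). Qed.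

Lemma sg_winv u v : sg_eq u v -> sg_eq (winv u) (winv v).
Proof.
move=> H.
have H1 := sg_sym (sg_catl (winv u) (sg_mulV v)); rewrite cats0 in H1.
apply: (sg_trans H1).
have H2 := sg_catl (winv u) (sg_catr (winv v) (sg_sym H)).
apply: (sg_trans H2).
exact: sg_dropVl.
Qed.

Lemma in_comm_conj u g : in_comm u -> in_comm (winv g ++ u ++ g).
Proof.
move=> Hu; apply: (comm_eq (u := u ++ (winv u ++ winv g ++ u ++ g))).
  exact: sg_dropl.
by apply: comm_mul => //; apply: comm_gen.
Qed.

Lemma in_comm_ins l a r : in_comm a -> in_comm (l ++ r) -> in_comm (l ++ a ++ r).
Proof.
move=> Ha Hlr.
apply: (comm_eq (u := (l ++ a ++ winv l) ++ (l ++ r))).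
  rewrite -!catA; apply: sg_catl; apply: sg_catl; exact: sg_dropVl.
apply: comm_mul => //.
by have := @in_comm_conj a (winv l) Ha; rewrite winvK.
Qed.

Lemma in_comm_swap l a b r : in_comm (l ++ a ++ b ++ r) -> in_comm (l ++ b ++ a ++ r).
Proof.
move=> H.
apply: (comm_eq (u := (l ++ a ++ b) ++ (winv b ++ winv a ++ b ++ a) ++ r)).
  rewrite -!catA; apply: sg_catl.
  have E : a ++ b ++ winv b ++ winv a ++ b ++ a ++ r = (a ++ b) ++ winv (a ++ b) ++ (b ++ a ++ r).
    by rewrite winv_cat -!catA.
  rewrite E; exact: sg_dropl.
apply: in_comm_ins; first exact: comm_gen.
by rewrite -!catA.
Qed.

End Words.

Section Core.
Variable Z : rack.
Implicit Types u v w a b l r g : word Z.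

Definition cb (x p : Z) : bool :=
  if excluded_middle_informative (connected x p) then true else false.
Lemma cbP x p : reflect (connected x p) (cb x p).
Proof. by rewrite /cb; case: excluded_middle_informative => H; constructor. Qed.
Lemma cb_conn x y z : connected x y -> cb x z = cb y z.
Proof.
move=> H; apply/idP/idP => /cbP H'; apply/cbP.
  exact: conn_trans (conn_sym H) H'.
exact: conn_trans H H'.
Qed.

Lemma winv1 (x : Z) bb : winv [:: (x, bb)] = [:: (x, ~~ bb)].
Proof. by []. Qed.

Lemma conn_conj (p q : Z) : connected p q ->
  exists g, forall bb, sg_eq [:: (q, bb)] (winv g ++ [:: (p, bb)] ++ g).
Proof.
elim=> {p q}.
- move=> x; exists [::] => bb; exact: sg_refl.
- move=> x y _ [g H]; exists (winv g) => bb; rewrite winvK.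
  apply: sg_sym.
  apply: (sg_trans (sg_catl g (sg_catr (winv g) (H bb)))).
  rewrite -!catA; apply: (sg_trans (sg_dropl _ _)).
  have := sg_catl [:: (x, bb)] (sg_mulV g); rewrite cats0; apply.
- move=> x y z _ [g1 H1] _ [g2 H2]; exists (g1 ++ g2) => bb.
  apply: (sg_trans (H2 bb)).
  have := sg_catl (winv g2) (sg_catr g2 (H1 bb)).
  by rewrite winv_cat -!catA.
- move=> x y; exists [:: (y, false)] => -[|].
    have := sg_winv (sg_sym (sg_conj x y)); apply.
  exact: (sg_sym (sg_conj x y)).
Qed.

Lemma in_comm_pair (p q : Z) bb : connected p q -> in_comm [:: (p, bb); (q, ~~ bb)].
Proof.
move=> /conn_conj [g H].
apply: (@comm_eq Z (winv [:: (p, ~~ bb)] ++ winv g ++ [:: (p, ~~ bb)] ++ g)); last first.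
  exact: comm_gen.
rewrite winv1 negbK; apply: sg_sym.
exact: (sg_catl [:: (p, bb)] (H (~~ bb))).
Qed.

Lemma split_has (T : Type) (P : pred T) s : has P s ->
  exists s1 x s2, s = s1 ++ x :: s2 /\ P x.
Proof.
elim: s => [|y s IH] //= /orP [Py|/IH [s1 [x [s2 [-> Px]]]]].
  by exists [::], y, s.
by exists (y :: s1), x, s2.
Qed.

Definition cpos (p : Z) w := count (fun x : Z * bool => cb x.1 p && ~~ x.2) w.
Definition cneg (p : Z) w := count (fun x : Z * bool => cb x.1 p && x.2) w.

Lemma core n u : size u <= n -> (forall p, cpos p u = cneg p u) -> in_comm u.
Proof.
elim: n u => [|n IH] [|[p bb] r] //= Hs Hc; try exact: comm_one.
have Hpp : cb p p by apply/cbP; apply: conn_refl.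
have [s1 [[q b'] [s2 [Er /andP [Hq /eqP Hb]]]]] :
    exists s1 x s2, r = s1 ++ x :: s2 /\ (cb x.1 p && (x.2 == ~~ bb)).
  apply: split_has; rewrite has_count.
  have := Hc p; rewrite /cpos /cneg /= Hpp /=. clear Hc Hs IH.
  case: bb => /=.
    have -> : count (fun x : Z * bool => cb x.1 p && (x.2 == false)) r
            = count (fun x : Z * bool => cb x.1 p && ~~ x.2) r.
      by apply: eq_count => -[x []].
    lia.
  have -> : count (fun x : Z * bool => cb x.1 p && (x.2 == true)) r
          = count (fun x : Z * bool => cb x.1 p && x.2) r.
    by apply: eq_count => -[x []].
  lia.
simpl in Hb; subst b' r.
have Hpq : connected p q by apply: conn_sym; apply/cbP.
change (in_comm ([:: (p, bb)] ++ s1 ++ [:: (q, ~~ bb)] ++ s2)).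
apply: in_comm_swap.
change (in_comm ([::] ++ [:: (p, bb); (q, ~~ bb)] ++ (s1 ++ s2))).
apply: in_comm_ins; first exact: in_comm_pair.
apply: IH; first by move: Hs; rewrite !size_cat /=; lia.
move=> p'; have := Hc p'; rewrite /cpos /cneg /= !count_cat /=.
rewrite (cb_conn p' Hpq).
case: (cb q p'); case: bb {Hc Hs Hq} => /=; lia.
Qed.

Section Inv.
Variable f : Z -> bool.
Hypothesis hf : forall x y, f (rop x y) = f x.
Definition fp w := count (fun x : Z * bool => f x.1 && ~~ x.2) w.
Definition fn w := count (fun x : Z * bool => f x.1 && x.2) w.
Lemma sg_invar u v : sg_eq u v -> fp u + fn v = fp v + fn u.
Proof.
rewrite /fp /fn; elim.
- by [].
- move=> ? ? _ ?; lia.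
- move=> ? ? ? _ ? _ ?; lia.
- move=> l r' a' b' _ IH; rewrite !count_cat; lia.
- by move=> x [] /=; case: (f x).
- by move=> x y /=; rewrite hf; case: (f x); case: (f y).
Qed.
End Inv.

End Core.

Lemma conn_fst (X Y : rack) (p q : prod_rack X Y) : connected p q -> connected p.1 q.1.
Proof.
elim=> {p q}.
- move=> x; exact: conn_refl.
- move=> x y _ H; exact: conn_sym.
- move=> x y z _ H1 _ H2; exact: conn_trans H1 H2.
- move=> x y; exact: conn_step.
Qed.
Lemma conn_snd (X Y : rack) (p q : prod_rack X Y) : connected p q -> connected p.2 q.2.
Proof.
elim=> {p q}.
- move=> x; exact: conn_refl.
- move=> x y _ H; exact: conn_sym.
- move=> x y z _ H1 _ H2; exact: conn_trans H1 H2.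
- move=> x y; exact: conn_step.
Qed.

Lemma comp_of_eq (X : rack) (a b : X) : connected a b -> comp_of a = comp_of b.
Proof.
move=> H; rewrite /comp_of; apply: subset_eq_compat.
apply: functional_extensionality => z; apply: propositional_extensionality; split.
  move=> H'; exact: conn_trans (conn_sym H) H'.
move=> H'; exact: conn_trans H H'.
Qed.

Lemma comp_rep_conn (X : rack) (a : X) : connected (comp_rep (comp_of a)) a.
Proof.
rewrite /comp_rep.
destruct (IndefiniteDescription.constructive_indefinite_description _ (proj2_sig (comp_of a))) as [r E].
simpl in E |- *.
have h : connected a a := conn_refl a. by rewrite E in h.
Qed.

Lemma sync_map_comp (X Y : rack) (p : prod_rack X Y) :
  sync_map (comp_of p) = (comp_of p.1, comp_of p.2).
Proof.
have H := comp_rep_conn p.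
by rewrite /sync_map (comp_of_eq (conn_fst H)) (comp_of_eq (conn_snd H)).
Qed.

Lemma to_triv_conn (X Y : rack) (x p : prod_rack X Y) :
  synchronized X Y -> to_triv x = to_triv p -> connected x p.
Proof.
move=> [g Hg _] E.
have E2 : comp_of x = comp_of p.
  have E' : (comp_of x.1, comp_of x.2) = (comp_of p.1, comp_of p.2) := E.
  by rewrite -(Hg (comp_of x)) -(Hg (comp_of p)) !sync_map_comp E'.
have E3 : connected x = connected p by have := f_equal (@proj1_sig _ _) E2.
by rewrite E3; apply: conn_refl.
Qed.

Lemma conn_to_triv (X Y : rack) (x p : prod_rack X Y) :
  connected x p -> to_triv x = to_triv p.
Proof.
move=> H; rewrite /to_triv (comp_of_eq (conn_fst H)) (comp_of_eq (conn_snd H)).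
by [].
Qed.

Lemma wmap_winv (X Y : rack) (f : X -> Y) w : wmap f (winv w) = winv (wmap f w).
Proof. by rewrite /wmap /winv map_rev -!map_comp. Qed.

Lemma wmap_cat (X Y : rack) (f : X -> Y) a b : wmap f (a ++ b) = wmap f a ++ wmap f b.
Proof. by rewrite /wmap map_cat. Qed.

Theorem corollary4p29 (X Y : rack) :
  productive X Y -> synchronized X Y ->
  forall w1 w2 : word (prod_rack X Y),
    sg_eq (wmap (fun p : prod_rack X Y => p.1) w1)
          (wmap (fun p : prod_rack X Y => p.1) w2) ->
    sg_eq (wmap (fun p : prod_rack X Y => p.2) w1)
          (wmap (fun p : prod_rack X Y => p.2) w2) ->
    sg_eq (wmap (@to_triv X Y) w1) (wmap (@to_triv X Y) w2) ->
    sg_eq w1 w2.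
Proof.
move=> Hprod Hsync w1 w2 H1 H2 H3.
pose u := w1 ++ winv w2.
have Hu : in_comm u.
  apply: (@core _ (size u)) => // p.
  pose f (c : prod_rack (Xtriv X) (Xtriv Y)) : bool :=
    if excluded_middle_informative (c = to_triv p) then true else false.
  have hf : forall x y, f (rop x y) = f x by move=> [a b] y.
  have := sg_invar hf H3.
  have Ef : forall w, fp f (wmap (@to_triv X Y) w) = cpos p w /\
                      fn f (wmap (@to_triv X Y) w) = cneg p w.
    move=> w; rewrite /fp /fn /cpos /cneg /wmap !count_map; split;
      apply: eq_count => -[x b] /=; rewrite /f /cb;
      case: excluded_middle_informative => Ha; case: excluded_middle_informative => Hb //.
    - by case: Hb; apply: to_triv_conn.
    - by case: Ha; apply: conn_to_triv.
    - by case: Hb; apply: to_triv_conn.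
    - by case: Ha; apply: conn_to_triv.
  have [-> ->] := Ef w1; have [-> ->] := Ef w2.
  have Ep : forall w, cpos p (winv w) = cneg p w.
    by move=> w; rewrite /cpos /cneg /winv count_rev count_map; apply: eq_count => -[x []].
  have En : forall w, cneg p (winv w) = cpos p w.
    by move=> w; rewrite /cpos /cneg /winv count_rev count_map; apply: eq_count => -[x []].
  have Cp : cpos p u = cpos p w1 + cpos p (winv w2) by rewrite /cpos count_cat.
  have Cn : cneg p u = cneg p w1 + cneg p (winv w2) by rewrite /cneg count_cat.
  rewrite Cp Cn Ep En; lia.
have Hfst : sg_eq (wmap (fun p : prod_rack X Y => p.1) u) (wmap (fun p : prod_rack X Y => p.1) [::]).
  rewrite /u wmap_cat wmap_winv.
  apply: sg_trans (sg_catr _ H1) _; exact: sg_mulV.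
have Hsnd : sg_eq (wmap (fun p : prod_rack X Y => p.2) u) (wmap (fun p : prod_rack X Y => p.2) [::]).
  rewrite /u wmap_cat wmap_winv.
  apply: sg_trans (sg_catr _ H2) _; exact: sg_mulV.
have Hu1 := Hprod u [::] Hu (@comm_one _) Hfst Hsnd.
have E1 := sg_sym (sg_catl w1 (sg_Vmul w2)); rewrite cats0 in E1.
apply: (sg_trans E1); rewrite catA.
by have := sg_catr w2 Hu1.
Qed.
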